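(* Let $G$ be a finite simple (unweighted) graph with $n\ge1$ vertices. Then for every $k\ge1$, \[[x^k]\tau_G=(-1)^{n+k}\sum_{m=1}^{k}\binom{n-m}{k-m}[x^m]\chi_G,\] where $\chi_G$ is the chromatic polynomial of $G$.
   Context: $X_G=\sum_\kappa\prod_{v}x_{\kappa(v)}$ over proper colourings $\kappa:V(G)\to\{1,2,\dots\}$. $P_\lambda$ is the disjoint union of paths $P_{\lambda_1},\dots,P_{\lambda_{\ell(\lambda)}}$ ($P_n$ the path on $n$ vertices), and $\{X_{P_\lambda}\}$ is a basis of the algebra of symmetric functions over $\mathbb{Q}$. The tree polynomial is $\tau_G(x)=\sum_\lambda a_\lambda x^{\ell(\lambda)}$ where $X_G=\sum_\lambda a_\lambda X_{P_\lambda}$. $[x^k]q$ denotes the coefficient of $x^k$ in a polynomial $q$. *)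

(* Defs.v *)
From mathcomp Require Import all_boot all_order all_algebra.
Set Implicit Arguments. Unset Strict Implicit. Unset Printing Implicit Defensive.
Import GRing.Theory Num.Theory.
Local Open Scope ring_scope.

Definition proper (T C : finType) (e : rel T) (k : {ffun T -> C}) : bool :=
  [forall x, forall y, e x y ==> (k x != k y)].

(* Coefficient of the monomial x_0^(s_0) ... x_(N-1)^(s_(N-1)) (N = size s,
   all other variables to the power 0) in the chromatic symmetric function
   X_(T,e) = sum over proper colourings k : T -> {0,1,2,...} of prod_v x_(k v).
   Every monomial in infinitely many variables is of this form, so these
   numbers determine X_(T,e) as a formal power series. *)
Definition cX (T : finType) (e : rel T) (s : seq nat) : nat :=
  #|[set k : {ffun T -> 'I_(size s)} | proper e k &
        [forall i : 'I_(size s), #|[set x | k x == i]| == nth 0%N s i]]|.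

(* the disjoint union of paths P_(lam_1), ..., P_(lam_l) *)
Definition pathV (lam : seq nat) : finType :=
  {i : 'I_(size lam) & 'I_(nth 0%N lam i)}.
Definition pathE (lam : seq nat) : rel (pathV lam) :=
  fun u v => (tag u == tag v) &&
    (((tagged u : nat).+1 == tagged v) || ((tagged v : nat).+1 == tagged u)).

Definition is_part (n : nat) (s : seq nat) : bool :=
  [&& sorted geq s, all (fun x => 0 < x)%N s & sumn s == n].

(* sum of F lam over all partitions lam of n (each exactly once:
   length l <= n, parts <= n) *)
Definition psum (n : nat) (F : seq nat -> rat) : rat :=
  \sum_(l < n.+1) \sum_(t : l.-tuple 'I_n.+1 | is_part n (map val t))
     F (map val t).

(* tree polynomial, given the expansion coefficients a_lam *)
Definition tau_poly (n : nat) (a : seq nat -> rat) : {poly rat} :=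
  \sum_(l < n.+1) \sum_(t : l.-tuple 'I_n.+1 | is_part n (map val t))
     a (map val t) *: 'X^(size (map val t)).

Definition ncol (T : finType) (e : rel T) (q : nat) : nat :=
  #|[set k : {ffun T -> 'I_q} | proper e k]|.

(* Main.v *)
Require Import Defs.
From mathcomp Require Import all_boot all_order all_algebra.
From mathcomp Require Import ring zify.
Import GRing.Theory Num.Theory.
Local Open Scope ring_scope.

Lemma ncol_forest (T : finType) (e : rel T) (p : nat) (pr : T -> option T)
  (r : T -> nat)
  (Hr : forall u v, pr v = Some u -> (r u < r v)%N)
  (He : forall x y, e x y = (pr y == Some x) || (pr x == Some y)) :
  ncol e p.+1 = (p.+1 ^ #|[pred v | pr v == None]| * p ^ #|[pred v | pr v != None]|)%N.
Proof.
pose phi (k : {ffun T -> 'I_p.+1}) : {ffun T -> 'I_p.+1} :=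
  [ffun v => k v - (if pr v is Some u then k u else 0)].
have phi_inj : injective phi.
  move=> k1 k2 H; apply/ffunP => v.
  suff: forall m v, (r v < m)%N -> k1 v = k2 v by apply; apply: ltnSn.
  elim=> [|m IH] {}v //= Hv.
  have := congr1 (fun f : {ffun T -> 'I_p.+1} => f v) H; rewrite !ffunE.
  case E: (pr v) => [u|]; last by rewrite !subr0.
  rewrite (IH u); first by move/addIr.
  by apply: leq_trans (Hr _ _ E) _.
pose F (v : T) : pred 'I_p.+1 := if pr v is Some _ then (fun c => c != 0) else predT.
have -> : ncol e p.+1 = #|phi @^-1: [set g | g \in family F]|.
  rewrite /ncol; apply: eq_card => k; rewrite !inE.
  apply/idP/idP.
  - move/forallP=> Hp; apply/familyP => v; rewrite /F ffunE.
    case E: (pr v) => [u|] //.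
    have := forallP (Hp u) v; rewrite He E eqxx /= => H.
    rewrite unfold_in /=; apply/negP => /eqP/subr0_eq Hk.
    by rewrite Hk eqxx in H.
  - move/familyP=> Hf; apply/forallP => x; apply/forallP => y; apply/implyP.
    rewrite He => /orP[] /eqP E.
    + have := Hf y; rewrite /F ffunE E unfold_in /= => /eqP Hne.
      by apply/eqP => Hk; apply: Hne; rewrite Hk subrr.
    + have := Hf x; rewrite /F ffunE E unfold_in /= => /eqP Hne.
      by apply/eqP => Hk; apply: Hne; rewrite Hk subrr.
rewrite card_preimset // cardsE card_family foldrE big_map big_enum /=.
rewrite (bigID (fun v => pr v == None)) /=.
rewrite (eq_bigr (fun _ => p.+1)); last first.
  by move=> v /eqP E; rewrite /F E card_ord.
rewrite [X in (_ * X)%N](eq_bigr (fun _ => p)); last first.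
  move=> v; rewrite /F; case: (pr v) => // _ _.
  transitivity #|predC1 (0 : 'I_p.+1)|; last by rewrite cardC1 card_ord.
  by apply: eq_card => c; rewrite !inE.
by rewrite !prod_nat_const.
Qed.
Definition prv (lam : seq nat) (v : pathV lam) : option (pathV lam) :=
  if (tagged v : nat) == 0%N then None
  else Some (Tagged (fun i : 'I_(size lam) => 'I_(nth 0%N lam i))
     (Ordinal (leq_ltn_trans (leq_pred (tagged v)) (ltn_ord (tagged v))))).

Arguments prv {lam}.

Lemma prv_eq lam (u v : pathV lam) :
  (prv v == Some u) = (tag u == tag v) && ((tagged u : nat).+1 == tagged v).
Proof.
rewrite /prv; destruct v as [i j]; destruct u as [i' j']; simpl.
case: (eqVneq (j : nat) 0%N) => [Hj|Hj] /=.
  by rewrite Hj andbF.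
rewrite (inj_eq (@Some_inj _)).
case: (eqVneq i' i) => [Heq|Hii] /=.
  subst i'.
  have -> : (Tagged (fun i0 : 'I_(size lam) => 'I_(nth 0%N lam i0)) (Ordinal (leq_ltn_trans (leq_pred j) (ltn_ord j))) ==
        Tagged (fun i0 : 'I_(size lam) => 'I_(nth 0%N lam i0)) j') =
        (j' == Ordinal (leq_ltn_trans (leq_pred j) (ltn_ord j))).
    by rewrite eq_sym eq_Tagged.
  apply/idP/idP => [/eqP -> | /eqP H] /=; first by rewrite prednK // lt0n.
  by apply/eqP; apply: val_inj => /=; rewrite -H.
apply/negbTE; apply: contra Hii => /eqP H.
by have /= -> := congr1 tag H.
Qed.

Lemma pathE_prv lam (u v : pathV lam) :
  pathE u v = (prv v == Some u) || (prv u == Some v).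
Proof.
rewrite !prv_eq /pathE.
by rewrite [tag v == tag u]eq_sym; case: (tag u == tag v).
Qed.

Lemma prv_lt lam (u v : pathV lam) : prv v = Some u -> (tagged u < tagged v)%N.
Proof. by move/eqP; rewrite prv_eq => /andP[_ /eqP <-]. Qed.

Lemma card_pathV lam : #|pathV lam| = sumn lam.
Proof.
rewrite /pathV card_tagged.
rewrite (eq_map (fun i : 'I_(size lam) => card_ord (nth 0%N lam i))).
rewrite (map_comp (nth 0%N lam) val) val_enum_ord.
by rewrite -/(mkseq _ _) mkseq_nth.
Qed.

Lemma card_roots lam : all (fun x => 0 < x)%N lam ->
  #|[pred v : pathV lam | prv v == None]| = size lam.
Proof.
move=> Hpos.
have Hp : forall i : 'I_(size lam), (0 < nth 0%N lam i)%N.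
  by move=> i; apply: (all_nthP 0%N Hpos); rewrite ltn_ord.
pose f (i : 'I_(size lam)) : pathV lam :=
  Tagged (fun i : 'I_(size lam) => 'I_(nth 0%N lam i)) (Ordinal (Hp i)).
have finj : injective f by move=> i j /(congr1 tag).
rewrite -[RHS](card_ord (size lam)) -(card_imset _ finj).
apply: eq_card => v; rewrite !inE /prv.
apply/idP/imsetP.
- case: (eqVneq (tagged v : nat) 0%N) => [Hv|Hv] // _; exists (tag v) => //.
  by apply/eqP; rewrite eq_Tagged; apply/eqP/val_inj.
- by case=> i _ ->.
Qed.

Lemma ncol_path lam p : all (fun x => 0 < x)%N lam ->
  ncol (@pathE lam) p.+1 = (p.+1 ^ size lam * p ^ (sumn lam - size lam))%N.
Proof.
move=> Hpos.
rewrite (@ncol_forest _ _ p (@prv lam) (fun v => tagged v)); last 2 first.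
- by move=> u v; apply: prv_lt.
- by move=> x y; apply: pathE_prv.
rewrite card_roots //; congr (_ * _ ^ _)%N.
rewrite -(card_pathV lam) -(cardC [pred v : pathV lam | prv v == None]) card_roots //.
rewrite addKn; apply: eq_card => v; by rewrite !inE.
Qed.
Lemma cX_size (T : finType) (e : rel T) (s : seq nat) (q : nat) : size s = q ->
  cX e s = #|[set k : {ffun T -> 'I_q} | Defs.proper e k &
        [forall i : 'I_q, #|[set x | k x == i]| == nth 0%N s i]]|.
Proof. by move=> <-. Qed.

Lemma ncol_cX (T : finType) (e : rel T) (N q : nat) : (#|T| <= N)%N ->
  ncol e q = (\sum_(t : q.-tuple 'I_N.+1) cX e (map val t))%N.
Proof.
move=> HN.
have Hnth : forall (t : q.-tuple 'I_N.+1) (i : 'I_q),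
    nth 0%N (map val t) i = val (tnth t i).
  by move=> t i; rewrite (nth_map ord0) ?size_tuple // -tnth_nth.
have Hc : forall (k : {ffun T -> 'I_q}) (i : 'I_q), (#|[set x | k x == i]| < N.+1)%N.
  by move=> k i; rewrite ltnS; apply: leq_trans (max_card _) HN.
pose cnt (k : {ffun T -> 'I_q}) : q.-tuple 'I_N.+1 :=
  [tuple inord #|[set x | k x == i]| | i < q].
rewrite /ncol -sum1_card (partition_big cnt predT) //=.
apply: eq_bigr => t _.
rewrite (@cX_size _ _ _ q); last by rewrite size_map size_tuple.
rewrite -sum1_card; apply: eq_bigl => k; rewrite !inE; congr (_ && _).
apply/eqP/forallP => [<- i | H].
- by rewrite Hnth /cnt tnth_mktuple /= inordK.
- apply: eq_from_tnth => i; rewrite /cnt tnth_mktuple; apply: val_inj.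
  by rewrite /= inordK // -Hnth; apply/eqP.
Qed.

Lemma poly_eq_pts (p1 p2 : {poly rat}) :
  (forall q : nat, p1.[q.+2%:R] = p2.[q.+2%:R]) -> p1 = p2.
Proof.
move=> H; apply/eqP; rewrite -subr_eq0; apply/negPn/negP => Hd.
set rs := [seq (i.+2)%:R | i <- iota 0 (size (p1 - p2))] : seq rat.
have Hall : all (root (p1 - p2)) rs.
  by apply/allP => x /mapP[i _ ->]; rewrite /root !hornerE H subrr.
have Hu : uniq rs.
  by rewrite map_inj_uniq ?iota_uniq // => i j /eqP; rewrite eqr_nat => /eqP [].
by have := max_poly_roots Hd Hall Hu; rewrite size_map size_iota ltnn.
Qed.

Lemma coef_XB (j t : nat) :
  (('X - 1 : {poly rat}) ^+ j)`_t = (-1) ^+ (j + t) * ('C(j, t))%:R.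
Proof.
elim: j t => [|j IH] t.
  by rewrite expr0 coef1 bin0n; case: t => [|t] //=; rewrite ?mulr0 ?mulr1.
rewrite exprSr mulrBr mulr1 coefB coefMX.
case: t => [|t] /=.
  rewrite IH !bin0 !addn0 exprS; ring.
rewrite !IH binS natrD addSn !addnS !exprS; ring.
Qed.

Lemma size_term (n l : nat) (c : rat) : (l <= n)%N ->
  (size (c *: ('X^l * ('X - 1) ^+ (n - l))) <= n.+1)%N.
Proof.
move=> Hl; apply: leq_trans (size_scale_leq _ _) _.
apply: leq_trans (size_polyMleq _ _) _.
rewrite size_polyXn -polyC1 size_exp_XsubC /=.
by rewrite addnS subnKC.
Qed.

Lemma sgn_eq (n m k : nat) : (m <= n)%N -> (m <= k)%N ->
  (-1) ^+ (n - m + (k - m)) = (-1) ^+ (n + k) :> rat.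
Proof.
move=> Hn Hk.
have -> : (n + k = (n - m + (k - m)) + 2 * m)%N by lia.
by rewrite [RHS]exprD exprM expr2 mulrNN mulr1 expr1n mulr1.
Qed.

Section Main.
Variables (V : finType) (e : rel V)
  (e_sym : symmetric e) (e_irr : irreflexive e) (n_pos : (0 < #|V|)%N)
  (a : seq nat -> rat)
  (Ha : forall s : seq nat,
        (cX e s)%:R = psum #|V| (fun lam => a lam * (cX (@pathE lam) s)%:R))
  (chi : {poly rat})
  (Hchi : forall q : nat, chi.[q%:R] = (ncol e q)%:R).

Let n := #|V|.

Definition Cpoly : {poly rat} :=
  \sum_(l < n.+1) \sum_(t : l.-tuple 'I_n.+1 | is_part n (map val t))
     a (map val t) *: ('X^l * ('X - 1) ^+ (n - l)).

Lemma chiC : chi = Cpoly.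
Proof.
apply: poly_eq_pts => p.
rewrite Hchi (@ncol_cX _ e n) // natr_sum.
under eq_bigr do rewrite Ha.
rewrite /psum exchange_big /Cpoly horner_sum; apply: eq_bigr => l _.
rewrite exchange_big horner_sum; apply: eq_bigr => t Ht.
rewrite !hornerE -mulr_sumr -natr_sum -ncol_cX; last first.
  by rewrite card_pathV; case/and3P: Ht => _ _ /eqP ->.
case/and3P: Ht => _ Hpos /eqP Hsum.
rewrite ncol_path // Hsum size_map size_tuple natrM !natrX.
have -> : (p.+2%:R - 1 : rat) = p.+1%:R by rewrite mulrSr addrK.
by rewrite mulrA.
Qed.

Lemma size_chi : (size chi <= n.+1)%N.
Proof.
rewrite chiC /Cpoly.
apply: (big_ind (fun p : {poly rat} => size p <= n.+1)%N).
- by rewrite size_poly0.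
- by move=> x y Hx Hy; apply: leq_trans (size_polyD _ _) _; rewrite geq_max Hx.
move=> l _.
apply: (big_ind (fun p : {poly rat} => size p <= n.+1)%N).
- by rewrite size_poly0.
- by move=> x y Hx Hy; apply: leq_trans (size_polyD _ _) _; rewrite geq_max Hx.
by move=> t _; apply: size_term; rewrite -ltnS.
Qed.

Lemma chi0 : chi`_0 = 0.
Proof.
rewrite -horner_coef0.
have := Hchi 0; rewrite mulr0n => ->.
suff -> : ncol e 0 = 0%N by [].
apply/eqP; rewrite -leqn0 /ncol.
apply: leq_trans (max_card _) _.
by rewrite card_ffun card_ord exp0n.
Qed.

Definition Rpoly : {poly rat} :=
  \sum_(m < n.+1) chi`_m *: ('X^m * ('X - 1) ^+ (n - m)).

Lemma tauR : tau_poly n a = Rpoly.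
Proof.
apply: poly_eq_pts => p.
set y : rat := p.+2%:R.
set w : rat := y - 1.
have w0 : w != 0 by rewrite /w /y mulrSr addrK pnatr_eq0.
set z : rat := y / w.
have Hzw : z * w = y by rewrite /z divfK.
have H1 : (z - 1) * w = 1 by rewrite mulrBl Hzw mul1r /w opprB addrC subrK.
clearbody z.
have HR : Rpoly.[y] = w ^+ n * chi.[z].
  rewrite (horner_coef_wide _ size_chi) mulr_sumr /Rpoly horner_sum.
  apply: eq_bigr => m _; rewrite !hornerE -/w.
  have Hm : (m <= n)%N by rewrite -ltnS.
  have -> : w ^+ n = w ^+ m * w ^+ (n - m) by rewrite -exprD subnKC.
  rewrite -Hzw exprMn.
  move: (z ^+ m) (w ^+ m) (w ^+ (n - m)) (chi`_m) => A B C D /=.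
  ring.
rewrite HR chiC /Cpoly /tau_poly !horner_sum big_distrr /=; apply: eq_bigr => l _.
rewrite !horner_sum big_distrr /=; apply: eq_bigr => t _.
have Hl : (l <= n)%N by rewrite -ltnS.
rewrite !hornerE size_map size_tuple.
have -> : w ^+ n = w ^+ l * w ^+ (n - l) by rewrite -exprD subnKC.
symmetry.
transitivity (a [seq val i | i <- t] * ((z * w) ^+ l * ((z - 1) * w) ^+ (n - l))).
  rewrite !exprMn.
  move: (z ^+ l) (w ^+ l) ((z-1) ^+ (n-l)) (w ^+ (n-l)) (a _) => A B C D E /=; ring.
by rewrite Hzw H1 expr1n mulr1.
Qed.

Lemma final (k : nat) : (0 < k)%N ->
  (tau_poly n a)`_k =
    (-1) ^+ (n + k) *
    \sum_(1 <= m < k.+1) ('C(n - m, k - m))%:R * chi`_m.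
Proof.
move=> k_pos.
pose g m := ('C(n - m, k - m))%:R * chi`_m * (m <= k)%:R.
rewrite tauR /Rpoly coef_sum.
rewrite (eq_bigr (fun m : 'I_n.+1 => (-1) ^+ (n + k) * g m)); last first.
  move=> m _; rewrite coefZ coefXnM /g.
  case: ltnP => [Hkm|Hmk].
    by rewrite !mulr0.
  have Hmn : (m <= n)%N by rewrite -ltnS.
  by rewrite coef_XB (@sgn_eq n m k Hmn Hmk) /= mulr1 mulrCA [chi`_m * _]mulrC.
rewrite -mulr_sumr; congr (_ * _).
rewrite -(big_mkord xpredT g).
have Hz : forall m, (n < m)%N -> chi`_m = 0.
  by move=> m Hm; apply: nth_default; apply: leq_trans (size_chi) _.
have E1 : \sum_(0 <= m < (n + k).+1) g m = \sum_(0 <= m < n.+1) g m.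
  rewrite (@big_cat_nat _ _ _ n.+1 0 (n + k).+1 _ _ (leq0n _)) /=; last by rewrite ltnS leq_addr.
  rewrite [X in _ + X]big1_seq ?addr0 //.
  by move=> m /andP[_]; rewrite mem_index_iota => /andP[Hm _]; rewrite /g Hz ?mulr0 ?mul0r.
have E2 : \sum_(0 <= m < (n + k).+1) g m = \sum_(1 <= m < k.+1) ('C(n - m, k - m))%:R * chi`_m.
  rewrite (@big_cat_nat _ _ _ k.+1 0 (n + k).+1 _ _ (leq0n _)) /=; last by rewrite ltnS leq_addl.
  rewrite [X in _ + X]big1_seq ?addr0; last first.
    move=> m /andP[_]; rewrite mem_index_iota => /andP[Hm _].
    by rewrite /g leqNgt Hm /= mulr0.
  rewrite (@big_cat_nat _ _ _ 1 0 k.+1 _ _ (leq0n _)) //= big_nat1 /g chi0 mulr0 mul0r add0r.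
  apply: eq_big_nat => m /andP[_ Hm]; by rewrite -ltnS Hm mulr1.
by rewrite -E1 E2.
Qed.
End Main.

Theorem theorem3p2 (V : finType) (e : rel V)
  (e_sym : symmetric e) (e_irr : irreflexive e) (n_pos : (0 < #|V|)%N)
  (a : seq nat -> rat)
  (Ha : forall s : seq nat,
        (cX e s)%:R = psum #|V| (fun lam => a lam * (cX (@pathE lam) s)%:R))
  (chi : {poly rat})
  (Hchi : forall q : nat, chi.[q%:R] = (ncol e q)%:R)
  (k : nat) (k_pos : (0 < k)%N) :
  (tau_poly #|V| a)`_k =
    (-1) ^+ (#|V| + k) *
    \sum_(1 <= m < k.+1) ('C(#|V| - m, k - m))%:R * chi`_m.
Proof. by apply: final. Qed.
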